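(* For $n\ge2$ and all $P,Q\in\Gamma_n$, $D_{I\Delta}(P\|Q)\le \frac23 D_{h\Delta}(P\|Q)$.
   Context: $\Gamma_n=\{P=(p_1,\dots,p_n): p_i>0,\ \sum p_i=1\}$. $h(P\|Q)=\frac12\sum_{i=1}^n(\sqrt{p_i}-\sqrt{q_i})^2$; $\Delta(P\|Q)=\sum_{i=1}^n\frac{(p_i-q_i)^2}{p_i+q_i}$; $I(P\|Q)=\frac12\Big[\sum_{i=1}^n p_i\ln\frac{2p_i}{p_i+q_i}+\sum_{i=1}^n q_i\ln\frac{2q_i}{p_i+q_i}\Big]$. $D_{I\Delta}=I-\frac14\Delta$, $D_{h\Delta}=h-\frac14\Delta$. *)

(* Defs.v *)
(* classical reals R. Distributions are P : nat -> R, using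
   the coordinates p_0, ..., p_{n-1}. *)
From Stdlib Require Import Reals.
Open Scope R_scope.

Fixpoint rsum (n : nat) (f : nat -> R) : R :=
  match n with
  | O => 0
  | S m => rsum m f + f m
  end.

Definition Gamma (n : nat) (P : nat -> R) : Prop :=
  (forall i, (i < n)%nat -> 0 < P i) /\ rsum n P = 1.

Definition hdiv (n : nat) (P Q : nat -> R) : R :=
  / 2 * rsum n (fun i => (sqrt (P i) - sqrt (Q i)) ^ 2).

Definition Deltadiv (n : nat) (P Q : nat -> R) : R :=
  rsum n (fun i => (P i - Q i) ^ 2 / (P i + Q i)).

Definition Idiv (n : nat) (P Q : nat -> R) : R :=
  / 2 * (rsum n (fun i => P i * ln (2 * P i / (P i + Q i)))
       + rsum n (fun i => Q i * ln (2 * Q i / (P i + Q i)))).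

Definition D_IDelta (n : nat) (P Q : nat -> R) : R :=
  Idiv n P Q - / 4 * Deltadiv n P Q.

Definition D_hDelta (n : nat) (P Q : nat -> R) : R :=
  hdiv n P Q - / 4 * Deltadiv n P Q.

(* Main.v *)
From Coquelicot Require Import Coquelicot.
From Stdlib Require Import Reals Lra Psatz Lia.
Open Scope R_scope.
Require Import Defs.
Definition G (u:R) := 2/3 * (u / sqrt (1 - u^2)) + u/3 - /2 * (ln (1+u) - ln (1-u)).
Definition Gd (u:R) := let s := sqrt (1 - u^2) in (1 - s)^2 * (s+2) / (3 * s^3).
Lemma G_der u : -1 < u < 1 -> is_derive G u (Gd u).
Proof.
intros Hu. unfold G, Gd. auto_derive.
- replace (1 + - (u * (u * 1))) with (1 - u^2) by ring.
  assert (0 < 1 - u^2) by nra. repeat split; try lra. apply Rgt_not_eq, sqrt_lt_R0; lra.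
- replace (1 + - (u * (u * 1))) with (1 - u^2) by ring.
  assert (H0: 0 < 1 - u^2) by nra.
  pose proof (sqrt_lt_R0 _ H0) as Hs0. pose proof (sqrt_sqrt _ (Rlt_le _ _ H0)) as Hss.
  set (s := sqrt (1 - u^2)) in *.
  assert (1+u <> 0) by lra. assert (1-u <> 0) by lra. assert (1+-u <> 0) by lra.
  assert (s <> 0) by lra. assert (Hs2 : s^2 = 1-u^2) by (simpl; lra).
  field_simplify; auto.
  replace (u^4) with ((1-s^2)^2) by (rewrite Hs2; ring). replace (u^2) with (1-s^2) by (rewrite Hs2; ring). field. split; [auto|]. replace (-6 * s ^ 3 * (1 - s ^ 2) + 6 * s ^ 3) with (6*s^5) by ring. apply Rgt_not_eq. apply Rmult_lt_0_compat; [lra| apply pow_lt; lra].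
Qed.
Lemma Gd_nonneg u : -1 < u < 1 -> 0 <= Gd u.
Proof.
intros Hu. unfold Gd. assert (H0: 0 < 1 - u^2) by nra.
pose proof (sqrt_lt_R0 _ H0) as Hs0. set (s := sqrt (1 - u^2)) in *.
apply Rmult_le_pos. apply Rmult_le_pos. apply pow2_ge_0. lra.
apply Rlt_le, Rinv_0_lt_compat. apply Rmult_lt_0_compat; [lra| apply pow_lt; lra].
Qed.
Lemma G0 : G 0 = 0.
Proof. unfold G. replace (1 - 0^2) with 1 by ring. rewrite sqrt_1.
replace (1+0) with 1 by ring. replace (1-0) with 1 by ring. rewrite ln_1. field. Qed.
Lemma G_nonneg u : 0 <= u < 1 -> 0 <= G u.
Proof.
intros Hu. destruct (Req_dec u 0) as [->|Hne]. rewrite G0; lra.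
destruct (MVT_cor2 G Gd 0 u) as [c [Hc1 Hc2]]. lra.
intros c Hc. apply is_derive_Reals, G_der. lra.
rewrite G0 in Hc1. assert (0 <= Gd c) by (apply Gd_nonneg; lra). nra.
Qed.
Definition F (u:R) := 2/3*(1 - sqrt(1-u^2) - u^2/2) - /2*((1+u)*ln(1+u) + (1-u)*ln(1-u)) + u^2/2.
Lemma F_der u : -1 < u < 1 -> is_derive F u (G u).
Proof.
intros Hu. unfold F, G. auto_derive.
- replace (1 + - (u * (u * 1))) with (1 - u^2) by ring.
  assert (0 < 1 - u^2) by nra. repeat split; try lra.
- replace (1 + - (u * (u * 1))) with (1 - u^2) by ring.
  assert (H0: 0 < 1 - u^2) by nra.
  pose proof (sqrt_lt_R0 _ H0) as Hs0.
  set (s := sqrt (1 - u^2)) in *.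
  assert (1+u <> 0) by lra. assert (1-u <> 0) by lra. assert (1+-u <> 0) by lra.
  replace (1 + - u) with (1 - u) by ring.
  field. lra.
Qed.
Lemma F0 : F 0 = 0.
Proof. unfold F. replace (1 - 0^2) with 1 by ring. rewrite sqrt_1.
replace (1+0) with 1 by ring. replace (1-0) with 1 by ring. rewrite ln_1. field. Qed.
Lemma F_nonneg_pos u : 0 <= u < 1 -> 0 <= F u.
Proof.
intros Hu. destruct (Req_dec u 0) as [->|Hne]. rewrite F0; lra.
destruct (MVT_cor2 F G 0 u) as [c [Hc1 Hc2]]. lra.
intros c Hc. apply is_derive_Reals, F_der. lra.
rewrite F0 in Hc1. assert (0 <= G c) by (apply G_nonneg; lra). nra.
Qed.
Lemma F_even u : F (-u) = F u.
Proof. unfold F. replace (1 + - u) with (1 - u) by ring. replace (1 - - u) with (1 + u) by ring.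
replace ((-u)^2) with (u^2) by ring. ring. Qed.
Lemma F_nonneg u : -1 < u < 1 -> 0 <= F u.
Proof. intros Hu. destruct (Rle_dec 0 u). apply F_nonneg_pos; lra.
rewrite <- F_even. apply F_nonneg_pos; lra. Qed.
Lemma pointwise a b : 0 < a -> 0 < b ->
  0 <= 2/3*( /2*(sqrt a - sqrt b)^2 - /4*((a-b)^2/(a+b)) )
       - ( /2*(a*ln(2*a/(a+b)) + b*ln(2*b/(a+b))) - /4*((a-b)^2/(a+b)) ).
Proof.
intros Ha Hb.
set (c := (a+b)/2). set (u := (a-b)/(a+b)).
assert (Hu : -1 < u < 1).
{ unfold u. split. apply Rmult_lt_reg_r with (a+b). lra. field_simplify; lra.
  apply Rmult_lt_reg_r with (a+b). lra. field_simplify; lra. }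
assert (Hc : 0 < c) by (unfold c; lra).
assert (E1 : 2*a/(a+b) = 1+u) by (unfold u; field; lra).
assert (E2 : 2*b/(a+b) = 1-u) by (unfold u; field; lra).
assert (E3 : (sqrt a - sqrt b)^2 = a + b - 2 * (c * sqrt (1-u^2))).
{ replace ((sqrt a - sqrt b)^2) with (sqrt a * sqrt a + sqrt b * sqrt b - 2 * (sqrt a * sqrt b)) by ring.
  rewrite !sqrt_sqrt by lra. rewrite <- sqrt_mult by lra.
  replace (a*b) with (c^2 * (1-u^2)) by (unfold c, u; field; lra).
  rewrite sqrt_mult by (try apply pow2_ge_0; nra). rewrite sqrt_pow2 by lra. ring. }
rewrite E1, E2, E3.
replace (2/3*( /2*(a + b - 2 * (c * sqrt (1-u^2))) - /4*((a-b)^2/(a+b)) )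
       - ( /2*(a*ln(1+u) + b*ln(1-u)) - /4*((a-b)^2/(a+b)) )) with (c * F u).
apply Rmult_le_pos; [lra | apply F_nonneg; auto].
unfold F, c, u. field. lra.
Qed.
Lemma rsum_nonneg n f : (forall i, (i < n)%nat -> 0 <= f i) -> 0 <= rsum n f.
Proof. induction n; intros H; simpl. lra.
assert (0 <= rsum n f) by (apply IHn; intros; apply H; lia).
assert (0 <= f n) by (apply H; lia). lra. Qed.
Lemma rsum_lin4 n k1 k2 k3 k4 f1 f2 f3 f4 :
  rsum n (fun i => k1*f1 i + k2*f2 i + k3*f3 i + k4*f4 i)
  = k1*rsum n f1 + k2*rsum n f2 + k3*rsum n f3 + k4*rsum n f4.
Proof. induction n; simpl. ring. rewrite IHn. ring. Qed.

Theorem proposition5p1 (n : nat) (P Q : nat -> R) :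
  (2 <= n)%nat -> Gamma n P -> Gamma n Q ->
  D_IDelta n P Q <= 2 / 3 * D_hDelta n P Q.
Proof.
intros _ [HP _] [HQ _].
unfold D_IDelta, D_hDelta, Idiv, hdiv, Deltadiv.
set (f1 := fun i => (sqrt (P i) - sqrt (Q i)) ^ 2).
set (f2 := fun i => (P i - Q i) ^ 2 / (P i + Q i)).
set (f3 := fun i => P i * ln (2 * P i / (P i + Q i))).
set (f4 := fun i => Q i * ln (2 * Q i / (P i + Q i))).
assert (H : 0 <= rsum n (fun i => (2/3*/2)*f1 i + (-(2/3)*/4 + /4)*f2 i + (-/2)*f3 i + (-/2)*f4 i)).
{ apply rsum_nonneg. intros i Hi.
  pose proof (pointwise (P i) (Q i) (HP i Hi) (HQ i Hi)) as Hp.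
  unfold f1, f2, f3, f4. lra. }
rewrite rsum_lin4 in H. lra.
Qed.
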